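(* Let $(\mathcal{P},d)$ be a 1-2-metric and consider the greedy-routing network creation game on it with edge price $\alpha>0$. (i) If $\alpha<\tfrac12$, the Maximum Domination Set Graph is the unique Nash equilibrium. (ii) If $\alpha=\tfrac12$, the Greedy Equilibria are exactly the Domination Set Graphs, and the Nash equilibria are exactly the Domination Set Graphs in which $W_2^+(u)=\emptyset$ for every node $u$ (no node builds an edge to a node it reaches via a path of two 1-edges). (iii) If $\alpha>\tfrac12$, every Minimum Domination Set Graph is a Greedy Equilibrium.
   Context: A 1-2-metric is a finite metric space $(\mathcal{P},d)$ with $d(u,v)\in\{1,2\}$ for all distinct $u,v$; arcs of length 1 are 1-edges, of length 2 are 2-edges. Game: agents are the points of $\mathcal{P}$; agent $u$'s strategy is $S_u\subseteq\mathcal{P}\setminus\{u\}$; a profile defines the directed network with arcs $(u,v)$, $v\in S_u$, of length $d(u,v)$; networks are identified with profiles. A greedy path from $u$ to $v$ is a directed path $u=x_1,\dots,x_j=v$ of arcs with $d(x_i,v)>d(x_{i+1},v)$ for all $i$. $\mathrm{stretch}(u,v)$ is the minimum length of a greedy path from $u$ to $v$ divided by $d(u,v)$, or a fixed sufficiently large penalty constant $Z$ if none exists. Cost: $c_u=\sum_{v\ne u}\mathrm{stretch}(u,v)+\alpha|S_u|$. Nash equilibrium: no agent can strictly decrease its cost by changing its strategy. Greedy Equilibrium: no agent can strictly decrease its cost by adding one element to, deleting one element from, or swapping one element of its strategy. Notation for a network $G$ and node $u$: $N(u)$ = out-neighbours of $u$; $W_2(u)=\{v\in N(u):d(u,v)=2\}$;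 $W_{1\to1}(u)$ = nodes $w\ne u$ with some $v$ such that $d(u,v)=d(v,w)=1$ and $(u,v),(v,w)$ are arcs; $W_2^+(u)=W_2(u)\cap W_{1\to1}(u)$. $G^1_{-u}$ is the directed graph on $\mathcal{P}\setminus\{u\}$ with arc $(v,w)$ whenever $d(v,w)=1$. A vertex set $D$ of a directed graph $H$ is dominating if every vertex outside $D$ has an in-neighbour in $D$. A Domination Set Graph (DSG) is a network $G$ such that (i) $G$ contains every arc $(v,w)$ with $d(v,w)=1$; (ii) for every $u$, $N(u)$ is dominating in $G^1_{-u}$; (iii) for every $u$ there is no $N'\subseteq\mathcal{P}\setminus\{u\}$ obtained from $N(u)$ by deleting one element or replacing one element by another, such that $N'$ contains all $v$ with $d(u,v)=1$, $N'$ is dominating in $G^1_{-u}$, and $|\{v\in N':d(u,v)=2\}\cap W_{1\to1}(u)|<|W_2^+(u)|$. A Minimum Domination Set Graph (MinDSG) is a DSG in which for every $u$, $|W_2(u)|$ is minimum among all out-neighbourhoods $N'\subseteq\mathcal{P}\setminus\{u\}$ that contain all $v$ with $d(u,v)=1$ and are dominating in $G^1_{-u}$. The Maximum Domination Set Graph (MaxDSG) is the network containing every arc $(u,w)$, $u\ne w$, except the 2-edges $(u,w)$ for which some $v$ satisfies $d(u,v)=d(v,w)=1$. *)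

(* Defs.v *)
From HB Require Import structures.
From mathcomp Require Import all_boot all_order all_algebra.
From mathcomp Require Import boolp.
Set Implicit Arguments. Unset Strict Implicit. Unset Printing Implicit Defensive.
Import Order.TTheory GRing.Theory Num.Theory.
Local Open Scope ring_scope.

(* A 1-2-metric on the finite point set P: d u u = 0, symmetric,
   d u v in {1,2} for distinct u v (the triangle inequality then holds
   automatically). *)
Definition is_12metric (P : finType) (d : P -> P -> nat) : Prop :=
  [/\ forall u, d u u = 0%N,
      forall u v, d u v = d v u
    & forall u v, u != v -> d u v = 1%N \/ d u v = 2%N].

Definition profile (P : finType) := {ffun P -> {set P}}.

Definition valid_profile (P : finType) (S : profile P) : Prop :=
  forall u, u \notin S u.

Definition upd (P : finType) (S : profile P) (u : P) (T : {set P}) : profile P :=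
  [ffun w => if w == u then T else S w].

Definition greedy_path (P : finType) (d : P -> P -> nat) (S : profile P)
  (v x : P) (p : seq P) : bool :=
  path (fun a b => (b \in S a) && (d b v < d a v)%N) x p && (last x p == v).

Definition path_len (P : finType) (d : P -> P -> nat) (x : P) (p : seq P) : nat :=
  sumn (pairmap d x p).

Definition greedy_len (P : finType) (d : P -> P -> nat) (S : profile P)
  (u v : P) (n : nat) : Prop :=
  exists p, greedy_path d S v u p /\ path_len d u p = n.

Lemma ex_asbool_of (Q : nat -> Prop) :
  (exists n, Q n) -> exists n, `[< Q n >].
Proof. by case=> n Hn; exists n; apply/asboolP. Qed.

Definition stretch (R : realFieldType) (P : finType) (d : P -> P -> nat) (Z : R) (S : profile P)
  (u v : P) : R :=
  match pselect (exists n, greedy_len d S u v n) with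
  | left H =>
      (ex_minn (@ex_asbool_of (greedy_len d S u v) H))%:R / (d u v)%:R
  | right _ => Z
  end.

Definition cost (R : realFieldType) (P : finType) (d : P -> P -> nat) (alpha Z : R)
  (S : profile P) (u : P) : R :=
  \sum_(v | v != u) stretch d Z S u v + alpha * (#|S u|)%:R.

Definition nash_eq (R : realFieldType) (P : finType) (d : P -> P -> nat) (alpha Z : R)
  (S : profile P) : Prop :=
  forall (u : P) (T : {set P}), u \notin T ->
    ~ (cost d alpha Z (upd S u T) u < cost d alpha Z S u).

Definition del_or_swap (P : finType) (u : P) (A T : {set P}) : Prop :=
  (exists2 w, w \in A & T = A :\ w) \/
  (exists w w', [/\ w \in A, w' \notin A, w' != u & T = (A :\ w) :|: [set w']]).

Definition greedy_move (P : finType) (u : P) (A T : {set P}) : Prop :=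
  (exists w, [/\ w \notin A, w != u & T = A :|: [set w]]) \/ del_or_swap u A T.

Definition greedy_eq (R : realFieldType) (P : finType) (d : P -> P -> nat) (alpha Z : R)
  (S : profile P) : Prop :=
  forall (u : P) (T : {set P}), greedy_move u (S u) T ->
    ~ (cost d alpha Z (upd S u T) u < cost d alpha Z S u).

Definition W2 (P : finType) (d : P -> P -> nat) (S : profile P) (u : P) : {set P} :=
  [set v in S u | d u v == 2%N].

Definition W11 (P : finType) (d : P -> P -> nat) (S : profile P) (u : P) : {set P} :=
  [set w | (w != u) &&
     [exists v, [&& d u v == 1%N, d v w == 1%N, v \in S u & w \in S v]]].

Definition W2plus (P : finType) (d : P -> P -> nat) (S : profile P) (u : P) : {set P} :=
  W2 d S u :&: W11 d S u.

(* D is dominating in G^1_{-u} (vertex set P \ {u}, arcs (v,w) with d v w = 1):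
   D avoids u and every vertex x <> u outside D has an in-neighbour in D. *)
Definition dominating (P : finType) (d : P -> P -> nat) (u : P) (D : {set P}) : Prop :=
  u \notin D /\
  forall x, x != u -> x \notin D -> exists2 y, y \in D & d y x = 1%N.

Definition contains_1nbrs (P : finType) (d : P -> P -> nat) (u : P) (D : {set P}) : Prop :=
  forall v, d u v = 1%N -> v \in D.

Definition DSG (P : finType) (d : P -> P -> nat) (S : profile P) : Prop :=
  [/\ (forall v w, d v w = 1%N -> w \in S v),
      (forall u, dominating d u (S u))
    & (forall u, ~ exists N' : {set P},
          [/\ del_or_swap u (S u) N', contains_1nbrs d u N', dominating d u N'
            & (#|[set v in N' | d u v == 2%N] :&: W11 d S u| < #|W2plus d S u|)%N])].

Definition MinDSG (P : finType) (d : P -> P -> nat) (S : profile P) : Prop :=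
  DSG d S /\
  forall u (N' : {set P}), contains_1nbrs d u N' -> dominating d u N' ->
    (#|W2 d S u| <= #|[set v in N' | d u v == 2%N]|)%N.

Definition MaxDSG (P : finType) (d : P -> P -> nat) : profile P :=
  [ffun u => [set w | (w != u) &&
     ~~ ((d u w == 2%N) && [exists v, (d u v == 1%N) && (d v w == 1%N)])]].

(* Main.v *)
Require Import Defs.
From HB Require Import structures.
From mathcomp Require Import all_boot all_order all_algebra boolp.
From mathcomp Require Import zify ring lra.
Import Order.TTheory GRing.Theory Num.Theory.
Local Open Scope ring_scope.
Set Implicit Arguments. Unset Strict Implicit. Unset Printing Implicit Defensive.

Section S.
Variables (R : realFieldType) (P : finType) (d : P -> P -> nat) (alpha Z : R).
Hypothesis Hd : is_12metric d.

Lemma d0 u : d u u = 0%N. Proof. by case: Hd. Qed.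
Lemma dsym u v : d u v = d v u. Proof. by case: Hd. Qed.
Lemma d12 u v : u != v -> d u v = 1%N \/ d u v = 2%N. Proof. by case: Hd => _ _; apply. Qed.
Lemma deq0 u v : d u v = 0%N -> u = v.
Proof. move=> h; case: (eqVneq u v) => // /d12; lia. Qed.
Lemma dle2 u v : (d u v <= 2)%N.
Proof. case: (eqVneq u v) => [->|/d12]; rewrite ?d0; lia. Qed.

Definition Bm u v := [exists x, (d u x == 1%N) && (d x v == 1%N)].

Definition sv (T : {set P}) (S : profile P) u v : R :=
  if d u v == 1%N then (if v \in T then 1 else Z)
  else if (v \in T) || [exists x, [&& x \in T, d u x == 1%N, d x v == 1%N & v \in S x]] then 1
  else if [exists x, [&& x \in T, d x v == 1%N & v \in S x]] then 3/2 else Z.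

Lemma glen_char S u T v n : u != v ->
  greedy_len d (upd S u T) u v n <->
  (d u v = 1%N /\ v \in T /\ n = 1%N) \/
  (d u v = 2%N /\ ((v \in T /\ n = 2%N) \/
     exists x, [/\ x \in T, d x v = 1%N, v \in S x & n = (d u x).+1])).
Proof.
move=> uv; have := d12 uv => duv.
split.
- case=> p [] /andP [Hp /eqP Hl] <- {n}.
  case: p Hp Hl => [|a [|b [|c q]]] /=.
  + by move=> _ E; rewrite E eqxx in uv.
  + rewrite ffunE eqxx andbT => /andP [aT _] E; subst a.
    rewrite /path_len /= addn0.
    by case: duv => ->; [left | right; split => //; left].
  + rewrite ffunE eqxx andbT => /andP [/andP [aT lt1] /andP [bS lt2]] E; subst b.
    rewrite d0 in lt2.
    have dav : d a v = 1%N by have := dle2 a v; lia.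
    have du2 : d u v = 2%N by lia.
    have au : a != u by apply/eqP => E; subst a; lia.
    rewrite ffunE (negbTE au) in bS.
    right; split => //; right; exists a; split => //.
    by rewrite /path_len /= dav addn0 addn1.
  + move=> /andP [/andP [_ l1] /andP [/andP [_ l2] /andP [/andP [_ l3] _]]] _.
    have := dle2 u v; lia.
- case=> [[d1 [vT ->]]|[d2 [[vT ->]|[x [xT dxv vS ->]]]]].
  + exists [:: v]; split; last by rewrite /path_len /= d1.
    by rewrite /greedy_path /= ffunE eqxx vT d0 d1 eqxx.
  + exists [:: v]; split; last by rewrite /path_len /= d2.
    by rewrite /greedy_path /= ffunE eqxx vT d0 d2 eqxx.
  + have xu : x != u by apply/eqP => E; subst x; lia.
    exists [:: x; v]; split; last by rewrite /path_len /= dxv addn0 addn1.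
    by rewrite /greedy_path /= !ffunE eqxx (negbTE xu) xT vS dxv d2 d0 eqxx.
Qed.


Lemma dpos x y : x != y -> (0 < d x y)%N.
Proof. by move=> /d12; lia. Qed.

Lemma stretch_upd S u T v : u != v -> stretch d Z (upd S u T) u v = sv T S u v.
Proof.
move=> uv; have duv := d12 uv.
have G n := @glen_char S u T v n uv.
rewrite /stretch; case: pselect => [H|H].
- case: ex_minnP => m /asboolP Hm Hmin.
  have Hmin' n : greedy_len d (upd S u T) u v n -> (m <= n)%N.
    by move=> hn; apply: Hmin; apply/asboolP.
  move/G: Hm => Hm.
  rewrite /sv; case: duv => E; rewrite E /=.
  + case: Hm => [[_ [vT ->]]|[]]; last lia.
    by rewrite vT divr1.
  + have m2 : (2 <= m)%N.
      case: Hm => [[]|[_ [[_ ->]|[x [_ dxv _ ->]]]]] //; first lia.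
      have xu : x != u by apply/eqP => Ex; subst x; lia.
      have := dpos xu; rewrite dsym; lia.
    case c1: ((v \in T) || _).
    * have : (m <= 2)%N.
        apply: Hmin'; apply/G; right; split => //.
        case/orP: c1 => [vT|/existsP [x /and4P [xT /eqP dux /eqP dxv vS]]].
        - by left.
        - by right; exists x; split => //; rewrite dux.
      move=> m2'; have -> : m = 2%N by lia.
      by rewrite divff // pnatr_eq0.
    * case: Hm => [[]|[_ [[vT _]|[x [xT dxv vS Em]]]]]; first lia.
      - by rewrite vT in c1.
      have xu : x != u by apply/eqP => Ex; subst x; lia.
      have dux : d u x = 2%N.
        case: (d12 xu) => dxu; rewrite dsym in dxu => //.
        move: c1; rewrite orbC; case/norP => /existsPn /(_ x).
        by rewrite xT dxu dxv vS eqxx.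
      have -> : [exists x0, [&& x0 \in T, d x0 v == 1%N & v \in S x0]].
        by apply/existsP; exists x; rewrite xT dxv vS eqxx.
      by rewrite Em dux.
- rewrite /sv; case: duv => E; rewrite E /=.
  + case vT: (v \in T) => //; exfalso; apply: H; exists 1%N; apply/G; left; tauto.
  + case c1: ((v \in T) || _).
    * exfalso; apply: H; exists 2%N; apply/G; right; split => //.
      case/orP: c1 => [vT|/existsP [x /and4P [xT /eqP dux /eqP dxv vS]]].
      - by left.
      - by right; exists x; split => //; rewrite dux.
    * case c2: [exists _, _] => //.
      exfalso; case/existsP: c2 => x /and3P [xT /eqP dxv vS].
      apply: H; exists (d u x).+1; apply/G; right; split => //; right.
      by exists x.
Qed.


Lemma upd_id (S : profile P) u : upd S u (S u) = S.
Proof. by apply/ffunP => w; rewrite ffunE; case: eqP => // ->. Qed.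

Lemma card_sum u (X : {set P}) : u \notin X ->
  \sum_(v | v != u) ((v \in X)%:R : R) = #|X|%:R.
Proof.
move=> uX; rewrite -sum1_card natr_sum big_mkcond [RHS]big_mkcond /=.
apply: eq_bigr => v _; case: eqP => [->|_]; first by rewrite (negbTE uX).
by case: (v \in X).
Qed.

Lemma cost_upd (S : profile P) (u : P) (T : {set P}) : u \notin T ->
  cost d alpha Z (upd S u T) u =
  \sum_(v | v != u) (sv T S u v + alpha * (v \in T)%:R).
Proof.
move=> uT; rewrite /cost big_split /= -mulr_sumr card_sum // ffunE eqxx.
congr (_ + _); apply: eq_bigr => v vu; apply: stretch_upd; by rewrite eq_sym.
Qed.

Lemma sum_lt u v0 (f g : P -> R) : (forall v, v != u -> g v <= f v) -> v0 != u ->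
  g v0 < f v0 -> \sum_(v | v != u) g v < \sum_(v | v != u) f v.
Proof.
move=> H h0 hlt; rewrite (bigD1 v0 h0) [X in _ < X](bigD1 v0 h0) /=.
apply: ltr_leD => //; apply: ler_sum => v /andP [hv _]; exact: H.
Qed.

Lemma sum_ge_term u v0 (f : P -> R) : (forall v, v != u -> 0 <= f v) -> v0 != u ->
  f v0 <= \sum_(v | v != u) f v.
Proof.
move=> H h0; rewrite (bigD1 v0 h0) /= lerDl; apply: sumr_ge0 => v /andP [hv _]; exact: H.
Qed.

Lemma sum_le_bound u (f : P -> R) c : (forall v, v != u -> f v <= c) -> 0 <= c ->
  \sum_(v | v != u) f v <= #|P|%:R * c.
Proof.
move=> H c0; apply: le_trans (_ : \sum_(v : P) c <= _).
  rewrite [X in _ <= X](bigID (fun v => v != u)) /= -[X in X <= _]addr0.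
  apply: lerD; first by apply: ler_sum => v hv; exact: H.
  by apply: sumr_ge0.
by rewrite sumr_const mulr_natl.
Qed.


Definition H1 (S : profile P) := forall v w, d v w = 1%N -> w \in S v.
Definition good u (T : {set P}) := contains_1nbrs d u T /\ dominating d u T.
Definition g u (T : {set P}) v : R := if v \in T then 1 + alpha else if Bm u v then 1 else 3/2.

Lemma sv_inT S u (T : {set P}) v : v \in T -> sv T S u v = 1.
Proof. by move=> vT; rewrite /sv vT /=; case: ifP. Qed.

Lemma sv_ge1 (S : profile P) (u : P) (T : {set P}) v : 3/2 <= Z -> 1 <= sv T S u v.
Proof.
move=> hZ; rewrite /sv; case: ifP => _; [case: ifP|case: ifP => _; [|case: ifP]] => *; lra.
Qed.

Lemma sv_leZ (S : profile P) (u : P) (T : {set P}) v : 3/2 <= Z -> sv T S u v <= Z.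
Proof.
move=> hZ; rewrite /sv; case: ifP => _; [case: ifP|case: ifP => _; [|case: ifP]] => *; lra.
Qed.

Lemma sv_mono (S : profile P) u (T1 T2 : {set P}) v : T1 \subset T2 -> 3/2 <= Z ->
  sv T2 S u v <= sv T1 S u v.
Proof.
move=> /subsetP sub hZ.
have c1 : (v \in T1) || [exists x, [&& x \in T1, d u x == 1%N, d x v == 1%N & v \in S x]] ->
          (v \in T2) || [exists x, [&& x \in T2, d u x == 1%N, d x v == 1%N & v \in S x]].
  case/orP => [/sub -> //|/existsP [x /and4P [xT a b c]]].
  by apply/orP; right; apply/existsP; exists x; rewrite sub // a b c.
have c2 : [exists x, [&& x \in T1, d x v == 1%N & v \in S x]] ->
          [exists x, [&& x \in T2, d x v == 1%N & v \in S x]].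
  by case/existsP => x /and3P [xT a b]; apply/existsP; exists x; rewrite sub // a b.
have := sv_leZ S u T2 v hZ; have := sv_ge1 S u T2 v hZ.
rewrite /sv; case: ifP => _.
  case h: (v \in T1); first by rewrite (sub v h); lra.
  by case: (v \in T2); lra.
case h1: ((v \in T1) || [exists x, [&& x \in T1, d u x == 1%N, d x v == 1%N & v \in S x]]).
  by rewrite (c1 h1); lra.
case h2: [exists x, [&& x \in T1, d x v == 1%N & v \in S x]].
  by rewrite (c2 h2); case: (_ || _); lra.
by case: (_ || _); [|case: [exists _, _]]; lra.
Qed.

Lemma sv_allZ (S : profile P) (u : P) (T : {set P}) : u \notin T -> (forall v, v != u -> sv T S u v < Z) -> good u T.
Proof.
move=> uT H; have cont : contains_1nbrs d u T.
  move=> v duv; have vu : v != u by apply/eqP => E; subst v; rewrite d0 in duv.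
  move: (H v vu); rewrite /sv duv eqxx; case: (v \in T) => //; lra.
split => //; split => // x xu xT.
have := H x xu; rewrite /sv.
case: (d12 (u:=u) (v:=x) _); first by rewrite eq_sym.
  by move=> /cont; rewrite (negbTE xT).
move=> ->; rewrite (negbTE xT) /=.
case: ifP => [/existsP [y /and4P [yT _ /eqP dyx _]] _|_]; first by exists y.
case: ifP => [/existsP [y /and3P [yT /eqP dyx _]] _|_]; first by exists y.
lra.
Qed.

Lemma sv_good (S : profile P) (u : P) (T : {set P}) v : H1 S -> good u T -> v != u ->
  sv T S u v = if v \in T then 1 else if Bm u v then 1 else 3/2.
Proof.
move=> h1 [cont [uT dom]] vu.
case vT: (v \in T); first exact: sv_inT.
rewrite /sv vT /=.
case: (d12 (u:=u) (v:=v) _); first by rewrite eq_sym.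
  by move=> /cont; rewrite vT.
move=> ->.
have -> : [exists x, [&& x \in T, d u x == 1%N, d x v == 1%N & v \in S x]] = Bm u v.
  apply/idP/idP => /existsP [x].
    by case/and4P => _ a b _; apply/existsP; exists x; rewrite a b.
  case/andP => /eqP a /eqP b; apply/existsP; exists x.
  by rewrite (cont _ a) a b (h1 _ _ b) eqxx.
case: (Bm u v) => //.
have [y yT dyv] := dom v vu (negbT vT).
have -> // : [exists x, [&& x \in T, d x v == 1%N & v \in S x]].
by apply/existsP; exists y; rewrite yT dyv (h1 _ _ dyv) eqxx.
Qed.

Lemma cost_good (S : profile P) (u : P) (T : {set P}) : H1 S -> good u T ->
  cost d alpha Z (upd S u T) u = \sum_(v | v != u) g u T v.
Proof.
move=> h1 gd; have uT : u \notin T by case: gd => _ [].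
rewrite cost_upd //; apply: eq_bigr => v vu; rewrite (@sv_good S u T v h1 gd vu) /g.
by case: (v \in T); rewrite ?mulr1 ?mulr0 ?addr0.
Qed.


Hypothesis Ha : 0 < alpha.
Hypothesis HZ : (2 + alpha) * (#|P|%:R + 1) + 2 <= Z.

Lemma hZ32 : 3/2 <= Z.
Proof. have := ler0n R #|P|; have := mulr_ge0 (ltW Ha) (ler0n R #|P|); move: HZ Ha; nra. Qed.
Lemma hZa : 1 + alpha < Z.
Proof. have := ler0n R #|P|; have := mulr_ge0 (ltW Ha) (ler0n R #|P|); move: HZ Ha; nra. Qed.
Lemma hZb : (2 + alpha) * #|P|%:R < Z.
Proof. have := ler0n R #|P|; have := mulr_ge0 (ltW Ha) (ler0n R #|P|); move: HZ Ha; nra. Qed.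

Lemma good_or_Z (S : profile P) u (T : {set P}) : u \notin T ->
  good u T \/ exists2 v, v != u & Z <= sv T S u v.
Proof.
move=> uT; case: (boolP [forall v, (v != u) ==> (sv T S u v < Z)]) => [/forallP H|/forallPn [v]].
  by left; apply: (@sv_allZ S) => // v vu; exact: (implyP (H v) vu).
by rewrite negb_imply -leNgt => /andP [vu h]; right; exists v.
Qed.

Lemma fS_ge0 (S : profile P) u (T : {set P}) v : 0 <= sv T S u v + alpha * (v \in T)%:R.
Proof.
have := sv_ge1 S u T v hZ32; have : 0 <= alpha * (v \in T)%:R.
  by exact: mulr_ge0 (ltW Ha) (ler0n _ _).
lra.
Qed.

Lemma cost_ge_Z (S : profile P) u (T : {set P}) : u \notin T ->
  (exists2 v, v != u & Z <= sv T S u v) -> Z <= cost d alpha Z (upd S u T) u.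
Proof.
move=> uT [v vu h]; rewrite cost_upd //.
apply: (le_trans _ (sum_ge_term (fun v _ => fS_ge0 S u T v) vu)).
have : 0 <= alpha * (v \in T)%:R by exact: mulr_ge0 (ltW Ha) (ler0n _ _).
lra.
Qed.

Lemma cost_good_lt (S : profile P) u (T : {set P}) : H1 S -> good u T ->
  cost d alpha Z (upd S u T) u < Z.
Proof.
move=> h1 gd; rewrite cost_good //; apply: le_lt_trans hZb.
rewrite mulrC; apply: sum_le_bound; last by have := Ha; lra.
by move=> v _; rewrite /g; case: (v \in T); [|case: (Bm u v)]; have := Ha; lra.
Qed.

Lemma greedy_lt (S : profile P) : valid_profile S -> greedy_eq d alpha Z S ->
  forall u v, v != u -> sv (S u) S u v < Z.
Proof.
move=> val ge u v vu; rewrite ltNge; apply/negP => hv.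
have vS : v \notin S u.
  by apply/negP => vS; move: hv; rewrite sv_inT //; have := hZ32; lra.
have uT : u \notin S u :|: [set v] by rewrite in_setU in_set1 (negbTE (val u)) eq_sym (negbTE vu).
apply: (ge u (S u :|: [set v])); first by left; exists v; split.
have uS := val u.
have -> : cost d alpha Z S u = cost d alpha Z (upd S u (S u)) u by rewrite upd_id.
rewrite !cost_upd //.
apply: (@sum_lt u v) => //.
  move=> w wu; case: (eqVneq w v) => [->|wv].
    rewrite sv_inT; last by rewrite in_setU in_set1 eqxx orbT.
    rewrite (negbTE vS) in_setU in_set1 eqxx orbT mulr0 mulr1 addr0.
    have := hZa; lra.
  rewrite in_setU in_set1 (negbTE wv) orbF; apply: lerD => //.
  by apply: sv_mono; [apply: subsetUl|apply: hZ32].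
rewrite sv_inT; last by rewrite in_setU in_set1 eqxx orbT.
rewrite (negbTE vS) in_setU in_set1 eqxx orbT mulr0 mulr1 addr0.
have := hZa; lra.
Qed.

Lemma greedy_H1 (S : profile P) : valid_profile S -> greedy_eq d alpha Z S ->
  H1 S /\ forall u, good u (S u).
Proof.
move=> val ge.
have gd u : good u (S u). apply: (@sv_allZ S). exact: val. apply: greedy_lt => //.
split => // v w dvw; by case: (gd v) => /(_ w dvw).
Qed.

Lemma move_notin u (A T : {set P}) : u \notin A -> greedy_move u A T -> u \notin T.
Proof.
move=> uA [[w [_ wu ->]]|[[w _ ->]|[w [w' [_ _ w'u ->]]]]].
- by rewrite in_setU in_set1 (negbTE uA) eq_sym (negbTE wu).
- by rewrite in_setD1 (negbTE uA) andbF.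
- by rewrite in_setU in_set1 in_setD1 (negbTE uA) andbF eq_sym (negbTE w'u).
Qed.

Lemma nash_greedy (S : profile P) : valid_profile S -> nash_eq d alpha Z S -> greedy_eq d alpha Z S.
Proof. by move=> val ne u T mv; apply: ne; apply: move_notin mv; apply: val. Qed.


Lemma M_mem u v : (v \in MaxDSG d u) = (v != u) && ~~ ((d u v == 2%N) && Bm u v).
Proof. by rewrite ffunE inE. Qed.

Lemma H1_M : H1 (MaxDSG d).
Proof.
move=> v w dvw; rewrite M_mem dvw /= andbT.
by apply/eqP => E; subst w; rewrite d0 in dvw.
Qed.

Lemma M_good u : good u (MaxDSG d u).
Proof.
split.
  move=> v duv; rewrite M_mem duv /= andbT.
  by apply/eqP => E; subst v; rewrite d0 in duv.
split; first by rewrite M_mem eqxx.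
move=> x xu; rewrite M_mem xu /= negbK => /andP [_ /existsP [y /andP [/eqP duy /eqP dyx]]].
exists y => //; rewrite M_mem duy /= andbT.
by apply/eqP => E; subst y; rewrite d0 in duy.
Qed.

Lemma g_M_le u (T : {set P}) v : alpha < 1/2 -> good u T -> v != u ->
  g u (MaxDSG d u) v <= g u T v.
Proof.
have ha0 := Ha; move=> ha [cont _] vu; rewrite /g M_mem vu /=.
case: (d12 (u:=u) (v:=v) _); first by rewrite eq_sym.
  move=> E; rewrite E /= (cont _ E); lra.
move=> ->; rewrite eqxx /=.
case: (Bm u v) => /=; first by case: (v \in T); lra.
by case: (v \in T); lra.
Qed.

Lemma g_M_lt u (T : {set P}) : alpha < 1/2 -> good u T -> T <> MaxDSG d u ->
  exists2 v, v != u & g u (MaxDSG d u) v < g u T v.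
Proof.
have ha0 := Ha; move=> ha [cont [uT _]] ne.
have : ~~ [forall v, (v \in T) == (v \in MaxDSG d u)].
  apply/negP => /forallP H; apply: ne; apply/setP => v; exact/eqP/H.
case/forallPn => v hv.
have vu : v != u by apply/eqP => E; subst v; move: hv; rewrite (negbTE uT) M_mem eqxx.
exists v => //; move: hv; rewrite /g M_mem vu /=.
case: (d12 (u:=u) (v:=v) _); first by rewrite eq_sym.
  by move=> E; rewrite E /= (cont _ E).
move=> ->; rewrite eqxx /=.
by case: (Bm u v); case: (v \in T) => //= _; lra.
Qed.

Lemma part1_fwd (S : profile P) : alpha < 1/2 -> valid_profile S -> nash_eq d alpha Z S ->
  S = MaxDSG d.
Proof.
move=> ha val ne; have [h1 gd] := greedy_H1 val (nash_greedy val ne).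
apply/ffunP => u; apply/eqP; apply/negPn/negP => /eqP neq.
have [v vu lt] := g_M_lt ha (gd u) neq.
apply: (ne u (MaxDSG d u)); first by case: (M_good u) => _ [].
have -> : cost d alpha Z S u = cost d alpha Z (upd S u (S u)) u by rewrite upd_id.
rewrite !cost_good //; last exact: M_good.
apply: (sum_lt (v0:=v)) => // w wu; exact: g_M_le.
Qed.

Lemma part1_bwd : alpha < 1/2 -> nash_eq d alpha Z (MaxDSG d).
Proof.
move=> ha u T uT.
have -> : cost d alpha Z (MaxDSG d) u =
  cost d alpha Z (upd (MaxDSG d) u (MaxDSG d u)) u by rewrite upd_id.
case: (good_or_Z (MaxDSG d) uT) => [gd|bad].
  rewrite !cost_good //; [|exact: H1_M|exact: M_good|exact: H1_M].
  apply/negP; rewrite -leNgt; apply: ler_sum => v vu; exact: g_M_le.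
have := cost_ge_Z uT bad; have := @cost_good_lt (MaxDSG d) u _ H1_M (M_good u); lra.
Qed.


Definition Y u (T : {set P}) := [set v in T | d u v == 2%N].
Definition X (S : profile P) u (T : {set P}) := Y u T :&: W11 d S u.
Definition h u v : R := if d u v == 1%N then 1 + alpha else if Bm u v then 1 else 3/2.

Lemma W11_mem (S : profile P) u v : H1 S -> (v \in W11 d S u) = (v != u) && Bm u v.
Proof.
move=> h1; rewrite /W11 inE; congr andb; apply/idP/idP => /existsP [x].
  by case/and4P => a b _ _; apply/existsP; exists x; rewrite a b.
case/andP => /eqP a /eqP b; apply/existsP; exists x.
by rewrite (h1 _ _ a) (h1 _ _ b) a b eqxx.
Qed.

Lemma g_split (S : profile P) u (T : {set P}) v : H1 S -> good u T -> v != u ->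
  g u T v = h u v + 1/2 * (v \in X S u T)%:R + (alpha - 1/2) * (v \in Y u T)%:R.
Proof.
move=> h1 [cont _] vu; rewrite /g /h /X /Y in_setI (W11_mem _ _ h1) !inE vu /=.
case: (d12 (u:=u) (v:=v) _); first by rewrite eq_sym.
  by move=> E; rewrite E (cont _ E) /= !mulr0 !addr0.
move=> ->; rewrite /= andbT.
case: (v \in T); case: (Bm u v) => /=; rewrite ?mulr0 ?mulr1 ?addr0; lra.
Qed.

Lemma cost_formula (S : profile P) u (T : {set P}) : H1 S -> good u T ->
  cost d alpha Z (upd S u T) u =
  \sum_(v | v != u) h u v + 1/2 * #|X S u T|%:R + (alpha - 1/2) * #|Y u T|%:R.
Proof.
move=> h1 gd; have uT : u \notin T by case: gd => _ [].
rewrite cost_good // (eq_bigr _ (fun v vu => g_split h1 gd vu)) !big_split /=.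
rewrite -!mulr_sumr !card_sum //.
  by rewrite !inE (negbTE uT).
by rewrite !inE (negbTE uT).
Qed.

Lemma good_sup u (A B : {set P}) : good u A -> A \subset B -> u \notin B -> good u B.
Proof.
move=> [cont [_ dom]] /subsetP sub uB; split; first by move=> v /cont /sub.
split => // x xu xB.
have xA : x \notin A by apply/negP => /sub; rewrite (negbTE xB).
by have [y yA dyx] := dom x xu xA; exists y => //; apply: sub.
Qed.

Lemma greedy_of (S : profile P) : 1/2 <= alpha -> valid_profile S -> H1 S ->
  (forall u, good u (S u)) ->
  (forall u N', del_or_swap u (S u) N' -> good u N' ->
     cost d alpha Z (upd S u (S u)) u <= cost d alpha Z (upd S u N') u) ->
  greedy_eq d alpha Z S.
Proof.
move=> ha val h1 gd hyp u T mv.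
have uT := move_notin (val u) mv.
have -> : cost d alpha Z S u = cost d alpha Z (upd S u (S u)) u by rewrite upd_id.
case: mv => [[w [wS wu ET]]|ds].
  have sub : S u \subset T by rewrite ET subsetUl.
  have gT : good u T := good_sup (gd u) sub uT.
  rewrite !cost_formula //.
  have c1 : (#|X S u (S u)| <= #|X S u T|)%N.
    by apply: subset_leq_card; apply: setSI; apply/subsetP => v; rewrite !inE => /andP [/(subsetP sub) -> ->].
  have c2 : (#|Y u (S u)| <= #|Y u T|)%N.
    by apply: subset_leq_card; apply/subsetP => v; rewrite !inE => /andP [/(subsetP sub) -> ->].
  move: c1 c2; rewrite -!(ler_nat R) => c1 c2.
  have c3 : (alpha - 1/2) * #|Y u (S u)|%:R <= (alpha - 1/2) * #|Y u T|%:R.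
    by apply: ler_wpM2l => //; lra.
  lra.
case: (good_or_Z S uT) => [gT|bad]; first by apply/negP; rewrite -leNgt; apply: hyp.
have := cost_ge_Z uT bad; have := @cost_good_lt S u _ h1 (gd u); lra.
Qed.


Lemma DSG_H1 (S : profile P) : DSG d S -> H1 S /\ forall u, good u (S u).
Proof.
case=> h1 dom _; split => // u; split => //.
by move=> v duv; apply: h1.
Qed.

Lemma part2_greedy_fwd (S : profile P) : alpha = 1/2 -> valid_profile S ->
  greedy_eq d alpha Z S -> DSG d S.
Proof.
move=> ha val ge; have [h1 gd] := greedy_H1 val ge.
split => //; first by move=> u; case: (gd u).
move=> u [N' [ds cont dom lt]].
apply: (ge u N'); first by right.
have -> : cost d alpha Z S u = cost d alpha Z (upd S u (S u)) u by rewrite upd_id.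
have gN : good u N' by split.
have gS := gd u.
rewrite !cost_formula //.
have : #|X S u N'|%:R < #|X S u (S u)|%:R :> R by rewrite ltr_nat.
rewrite ha; lra.
Qed.

Lemma part2_greedy_bwd (S : profile P) : alpha = 1/2 -> valid_profile S ->
  DSG d S -> greedy_eq d alpha Z S.
Proof.
move=> ha val ds; have [h1 gd] := DSG_H1 ds.
apply: greedy_of => //; first lra.
move=> u N' dsw gN; case: ds => _ _ /(_ u) nex.
rewrite !cost_formula //.
have : #|X S u (S u)|%:R <= #|X S u N'|%:R :> R.
  rewrite ler_nat leqNgt; apply/negP => lt; apply: nex; exists N'.
  by case: gN => c dm; split.
rewrite ha; lra.
Qed.

Lemma XM0 (S : profile P) u : H1 S -> X S u (MaxDSG d u) = set0.
Proof.
move=> h1; apply/setP => v; rewrite /X /Y in_setI (W11_mem _ _ h1) !inE M_mem.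
by case: (v != u); case: (d u v == 2%N); case: (Bm u v).
Qed.

Lemma part2_nash_fwd (S : profile P) : alpha = 1/2 -> valid_profile S ->
  nash_eq d alpha Z S -> DSG d S /\ forall u, W2plus d S u = set0.
Proof.
move=> ha val ne; have ds := part2_greedy_fwd ha val (nash_greedy val ne).
split => // u; have [h1 gd] := DSG_H1 ds.
have := ne u (MaxDSG d u); rewrite M_mem eqxx /= => /(_ isT).
have -> : cost d alpha Z S u = cost d alpha Z (upd S u (S u)) u by rewrite upd_id.
rewrite !cost_formula // ?XM0 //; last exact: M_good.
rewrite cards0 ha => H; apply: cards0_eq.
have : ~~ (0 < #|X S u (S u)|)%N.
  apply/negP; rewrite -(ltr_nat R) => lt; apply: H; lra.
by rewrite lt0n negbK => /eqP.
Qed.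

Lemma part2_nash_bwd (S : profile P) : alpha = 1/2 -> valid_profile S ->
  DSG d S -> (forall u, W2plus d S u = set0) -> nash_eq d alpha Z S.
Proof.
move=> ha val ds w0 u T uT; have [h1 gd] := DSG_H1 ds.
have -> : cost d alpha Z S u = cost d alpha Z (upd S u (S u)) u by rewrite upd_id.
case: (good_or_Z S uT) => [gT|bad].
  rewrite !cost_formula //.
  have -> : X S u (S u) = set0 by exact: w0.
  rewrite cards0 ha; have := ler0n R #|X S u T|; lra.
have := cost_ge_Z uT bad; have := @cost_good_lt S u _ h1 (gd u); lra.
Qed.

Lemma part3 (S : profile P) : 1/2 < alpha -> valid_profile S ->
  MinDSG d S -> greedy_eq d alpha Z S.
Proof.
move=> ha val [ds mn]; have [h1 gd] := DSG_H1 ds.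
apply: greedy_of => //; first lra.
move=> u N' dsw gN; case: ds => _ _ /(_ u) nex.
rewrite !cost_formula //.
have : #|X S u (S u)|%:R <= #|X S u N'|%:R :> R.
  rewrite ler_nat leqNgt; apply/negP => lt; apply: nex; exists N'.
  by case: gN => c dm; split.
have : #|Y u (S u)|%:R <= #|Y u N'|%:R :> R.
  by rewrite ler_nat; case: gN => c dm; apply: mn.
move=> c2 c1.
have c3 : (alpha - 1/2) * #|Y u (S u)|%:R <= (alpha - 1/2) * #|Y u N'|%:R.
  by apply: ler_wpM2l => //; lra.
lra.
Qed.

End S.

Theorem theorem2p8 (R : realFieldType) (P : finType) (d : P -> P -> nat) (alpha : R) :
  is_12metric d -> 0 < alpha ->
  exists Z0 : R, forall Z : R, Z0 <= Z ->
  [/\ alpha < 1 / 2 ->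
        forall S : profile P, valid_profile S ->
          (nash_eq d alpha Z S <-> S = MaxDSG d),
      alpha = 1 / 2 ->
        forall S : profile P, valid_profile S ->
          (greedy_eq d alpha Z S <-> DSG d S) /\
          (nash_eq d alpha Z S <-> DSG d S /\ forall u, W2plus d S u = set0)
    & 1 / 2 < alpha ->
        forall S : profile P, valid_profile S ->
          MinDSG d S -> greedy_eq d alpha Z S].
Proof.
move=> Hd Ha; exists ((2 + alpha) * (#|P|%:R + 1) + 2) => Z HZ; split.
- move=> ha S val; split; first exact: part1_fwd.
  by move=> ->; apply: part1_bwd.
- move=> ha S val; split; split.
  + exact: part2_greedy_fwd.
  + exact: part2_greedy_bwd.
  + exact: part2_nash_fwd.
  + by case; apply: part2_nash_bwd.
- move=> ha S val; exact: part3.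
Qed.
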